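(* Let $G=\langle\sigma\rangle\times\langle\tau\rangle$ be a finite bicyclic group (direct product of the cyclic groups generated by $\sigma$ and $\tau$) and $M$ a $G$-module, written multiplicatively. For $H\le G$ let $M^H$ denote the $H$-invariants, and let $N_\sigma:M^{\langle\tau\rangle}\to M^G$ be the norm map $x\mapsto\prod_{j=0}^{\operatorname{ord}\sigma-1}\sigma^j(x)$. Then the kernel of the restriction map $$H^1(G,M)\to H^1(\langle\sigma\rangle,M)\times H^1(\langle\tau\rangle,M)\times H^1(\langle\sigma\tau\rangle,M)$$ is isomorphic to $$Q=\bigl(\ker(N_\sigma)\cap M^{\sigma-1}\cap M^{\sigma\tau-1}\bigr)\big/\bigl(M^{\langle\tau\rangle}\bigr)^{\sigma-1},$$ where for $g\in G$ and a subgroup $N\subseteq M$, $N^{g-1}=\{g(x)x^{-1}:x\in N\}$. *)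

(* Defs.v *)
From HB Require Import structures.
From mathcomp Require Import all_boot all_order all_algebra all_fingroup.
Set Implicit Arguments. Unset Strict Implicit. Unset Printing Implicit Defensive.
Import GRing.Theory.
Local Open Scope ring_scope.

Section Defs.
Variables (gT : finGroupType) (M : zmodType) (act : gT -> M -> M).

Definition cocycle (f : {ffun gT -> M}) : Prop :=
  forall x y : gT, f (x * y)%g = f x + act x (f y).

Definition coboundary_on (H : {set gT}) (f : {ffun gT -> M}) : Prop :=
  exists m : M, forall h, h \in H -> f h = act h m - m.

Definition fixed_in (H : {set gT}) (m : M) : Prop :=
  forall h, h \in H -> act h m = m.

Definition in_gm1 (g : gT) (N : M -> Prop) (x : M) : Prop :=
  exists y, N y /\ x = act g y - y.

Definition norm_map (s : gT) (m : M) : M :=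
  \sum_(j < #[s]%g) act (s ^+ j)%g m.

End Defs.

(* An isomorphism of quotient groups A/B ~= C/D (with B <= A subgroups of U,
   D <= C subgroups of V), given by a map on representatives. *)
Definition quot_iso (U V : zmodType) (A B : U -> Prop) (C D : V -> Prop) : Prop :=
  exists phi : U -> V,
    [/\ forall u, A u -> C (phi u),
        forall u v, A u -> A v -> D (phi (u + v) - phi u - phi v),
        forall u, A u -> (D (phi u) <-> B u)
      & forall w, C w -> exists2 u, A u & D (w - phi u)].

(* Main.v *)
Require Import Defs.
From HB Require Import structures.
From mathcomp Require Import all_boot all_order all_algebra all_fingroup.
From Stdlib Require Import ClassicalEpsilon.
Import GRing.Theory.
Local Open Scope ring_scope.

Set Implicit Arguments.
Section Aux.
Variables (gT : finGroupType) (sigma tau : gT) (M : zmodType) (act : gT -> M -> M).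
Variable hG : (<[sigma]> \x <[tau]>)%g = [set: gT].
Variable act1 : forall m, act 1%g m = m.
Variable actM : forall g h m, act (g * h)%g m = act g (act h m).
Variable actD : forall g m n, act g (m + n) = act g m + act g n.

Definition dd (m : M) (g : gT) := act g m - m.

Lemma act0 g : act g 0 = 0.
Proof. by apply: (addrI (act g 0)); rewrite -actD !addr0. Qed.

Lemma actN g m : act g (- m) = - act g m.
Proof. by apply/eqP; rewrite -addr_eq0 -actD addNr act0. Qed.

Lemma actB g m n : act g (m - n) = act g m - act g n.
Proof. by rewrite actD actN. Qed.

Lemma ddD m n g : dd (m + n) g = dd m g + dd n g.
Proof. by rewrite /dd actD opprD addrACA. Qed.

Lemma ddN m g : dd (- m) g = - dd m g.
Proof. by rewrite /dd actN opprK opprB addrC. Qed.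

Lemma ddB m n g : dd (m - n) g = dd m g - dd n g.
Proof. by rewrite ddD ddN. Qed.

Lemma dd0 m : dd m 1%g = 0.
Proof. by rewrite /dd act1 subrr. Qed.

Lemma ddfix m g : dd m g = 0 <-> act g m = m.
Proof. rewrite /dd; split=> [/eqP|->]; last by rewrite subrr.
by rewrite subr_eq0 => /eqP. Qed.

Lemma ddcoc m x y : dd m (x * y)%g = dd m x + act x (dd m y).
Proof. by rewrite /dd actB actM [RHS]addrC addrA subrK. Qed.

Lemma coc1 f : cocycle act f -> f 1%g = 0.
Proof.
move=> cf; have := cf 1%g 1%g; rewrite mulg1 act1.
by move=> /esym/eqP; rewrite -subr_eq0 addrK => /eqP.
Qed.

Lemma coc_sub f m : cocycle act f -> cocycle act [ffun g => f g - dd m g].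
Proof. by move=> cf x y; rewrite !ffunE cf ddcoc [act x (f y - _)]actB opprD addrACA. Qed.

Lemma coc_cyc f m x : cocycle act f -> f x = dd m x ->
  forall g, g \in <[x]>%g -> f g = dd m g.
Proof.
move=> cf fx g /cycleP [k ->]; elim: k => [|k IH]; first by rewrite expg0 coc1 // dd0.
by rewrite expgS cf fx IH ddcoc.
Qed.

Lemma commST x y : x \in <[sigma]>%g -> y \in <[tau]>%g -> (x * y = y * x)%g.
Proof.
have [_ _ cst _] := dprodP hG; move=> Hx Hy.
by have := (centsP cst) y Hy x Hx; rewrite /commute => ->.
Qed.

Lemma decomp g : exists2 x, x \in <[sigma]>%g & exists2 y, y \in <[tau]>%g & g = (x * y)%g.
Proof.
have [_ defG _ _] := dprodP hG.
have : g \in (<[sigma]> * <[tau]>)%g by rewrite defG inE.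
by case/mulsgP => x y Hx Hy ->; exists x => //; exists y.
Qed.

Lemma uniqST x1 y1 x2 y2 : x1 \in <[sigma]>%g -> y1 \in <[tau]>%g ->
  x2 \in <[sigma]>%g -> y2 \in <[tau]>%g -> (x1 * y1 = x2 * y2)%g -> x1 = x2.
Proof.
have [_ _ _ tI] := dprodP hG; move=> Hx1 Hy1 Hx2 Hy2 E.
have E2 : (x2^-1 * x1 = y2 * y1^-1)%g by rewrite -[x1](mulgK y1) E mulgA mulKg.
have : (x2^-1 * x1)%g \in (<[sigma]> :&: <[tau]>)%g.
  by rewrite inE groupM ?groupV //= E2 groupM ?groupV.
by rewrite tI => /set1P /eqP; rewrite -eq_mulVg1 => /eqP ->.
Qed.

Definition proj g := odflt 1%g [pick x in <[sigma]>%g | [exists y in <[tau]>%g, g == (x * y)%g]].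

Lemma projE x y : x \in <[sigma]>%g -> y \in <[tau]>%g -> proj (x * y)%g = x.
Proof.
move=> Hx Hy; rewrite /proj; case: pickP => [x' /andP [Hx' /existsP [y' /andP [Hy' /eqP E]]] | H] /=.
  exact: (uniqST Hx' Hy' Hx Hy (esym E)).
exfalso; have := H x; rewrite Hx /= => /negbT/negP; apply.
by apply/existsP; exists y; rewrite Hy eqxx.
Qed.

Lemma alg1 (x y k a c : M) : (x + y - k) - (x - a) - (y - c) = - (k - a - c).
Proof.
rewrite !opprD !opprK !addrA.
rewrite [x + y - k - x]addrAC [x + y - x]addrAC subrr add0r.
by rewrite [y - k + a - y]addrAC [y - k - y]addrAC subrr add0r.
Qed.

Definition mf (f : {ffun gT -> M}) : M :=
  epsilon (inhabits 0) (fun m => forall h, h \in <[tau]>%g -> f h = dd m h).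

Definition phi (f : {ffun gT -> M}) : M := f sigma - dd (mf f) sigma.

Lemma mfP f : coboundary_on act <[tau]>%g f -> forall h, h \in <[tau]>%g -> f h = dd (mf f) h.
Proof. by move=> Ht; apply: (epsilon_spec (inhabits 0) _ Ht). Qed.


Lemma fixw m1 : (forall h, h \in <[tau]>%g -> act h (dd m1 sigma) = dd m1 sigma) ->
  forall h x, h \in <[tau]>%g -> x \in <[sigma]>%g -> act h (dd m1 x) = dd m1 x.
Proof.
move=> Fw h x Hh /cycleP [i ->]; elim: i => [|i IH]; first by rewrite expg0 dd0 act0.
by rewrite expgS ddcoc actD Fw // -actM -(commST (cycle_id _) Hh) actM IH.
Qed.

Lemma gen2 f y : cocycle act f -> f sigma = dd y sigma -> f tau = dd y tau ->
  forall g, f g = dd y g.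
Proof.
move=> cf fs ft g; have [x Hx [z Hz ->]] := decomp g.
by rewrite cf (coc_cyc _ cf fs Hx) (coc_cyc _ cf ft Hz) ddcoc.
Qed.

Lemma main_sec :
  @quot_iso {ffun gT -> M} M
    (fun f => [/\ cocycle act f, coboundary_on act <[sigma]>%g f,
                  coboundary_on act <[tau]>%g f
                & coboundary_on act <[(sigma * tau)%g]>%g f])
    (fun f => cocycle act f /\ coboundary_on act [set: gT] f)
    (fun x => [/\ fixed_in act <[tau]>%g x, norm_map act sigma x = 0,
                  in_gm1 act sigma (fun _ => True) x
                & in_gm1 act (sigma * tau)%g (fun _ => True) x])
    (in_gm1 act sigma (fixed_in act <[tau]>%g)).
Proof.
exists phi; split.
- move=> f [cf [m1 H1] Ht [m2 H2]].
  have Hm := mfP Ht; set m := mf f in Hm *.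
  pose f' := [ffun g => f g - dd m g].
  have cf' : cocycle act f' := coc_sub m cf.
  have f't : forall h, h \in <[tau]>%g -> f' h = 0.
    by move=> h Hh; rewrite ffunE Hm // subrr.
  have f's : phi f = f' sigma by rewrite ffunE.
  have f'S : forall g, g \in <[sigma]>%g -> f' g = dd (m1 - m) g.
    by move=> g Hg; rewrite ffunE H1 // ddB.
  rewrite f's; split.
  + move=> h Hh; have := cf' sigma h.
    rewrite (f't h Hh) act0 addr0 (commST (cycle_id sigma) Hh) cf' (f't h Hh) add0r.
    by [].
  + rewrite (f'S _ (cycle_id _)) /norm_map -(big_mkord xpredT (fun j => act (sigma ^+ j) (dd (m1 - m) sigma))).
    rewrite (eq_bigr (fun j => act (sigma ^+ j.+1) (m1 - m) - act (sigma ^+ j) (m1 - m))); last first.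
      by move=> j _; rewrite /dd actB -actM -expgSr.
    by rewrite (telescope_sumr (fun k => act (sigma ^+ k) (m1 - m))) // expg_order expg0 act1 subrr.
  + by exists (m1 - m); split => //; rewrite (f'S _ (cycle_id _)).
  + exists (m2 - m); split => //.
    have := cf' sigma tau; rewrite (f't tau (cycle_id tau)) act0 addr0 => <-.
    by rewrite ffunE H2 ?cycle_id //; exact: (esym (ddB m2 m _)).
- move=> f g [cf _ Htf _] [cg _ Htg _].
  have Hf := mfP Htf; have Hg := mfP Htg.
  have Htfg : coboundary_on act <[tau]>%g (f + g).
    by exists (mf f + mf g) => h Hh; rewrite ffunE Hf // Hg // -ddD.
  have Hfg := mfP Htfg.
  have Fz : forall h, h \in <[tau]>%g -> dd (mf (f + g) - mf f - mf g) h = 0.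
    by move=> h Hh; rewrite !ddB -Hfg // -Hf // -Hg // ffunE [f h + g h - f h]addrAC subrr add0r subrr.
  exists (- (mf (f + g) - mf f - mf g)); split.
    by move=> h Hh; rewrite actN; congr (- _); apply/ddfix; apply: Fz.
  by rewrite /phi ffunE alg1 -!ddB; exact: (esym (ddN _ _)).
- move=> f [cf _ Ht _]; have Hm := mfP Ht; set m := mf f in Hm *.
  split.
  + move=> [y [Fy E]]; split => //; exists (m + y) => g _.
    pose f' := [ffun g => f g - dd m g].
    have cf' : cocycle act f' := coc_sub m cf.
    have := @gen2 f' y cf'; rewrite !ffunE.
    move=> /(_ _ _ g); rewrite ffunE => H.
    have H2 : f tau - dd m tau = dd y tau.
      rewrite Hm ?cycle_id // subrr; exact: (esym (proj2 (ddfix y tau) (Fy tau (cycle_id tau)))).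
    move: (H E H2) => /(congr1 (fun v => v + dd m g)); rewrite subrK => ->.
    by rewrite addrC; exact: (esym (ddD m y g)).
  + move=> [_ [m0 H0]]; exists (m0 - m); split.
      by move=> h Hh; apply/ddfix; rewrite ddB -Hm // H0 ?inE // subrr.
    by rewrite /phi H0 ?inE // -ddB.
- move=> w [Fw _ [m1 [_ E1]] [m2 [_ E2]]].
  pose f := [ffun g => dd m1 (proj g)].
  have fs : forall x, x \in <[sigma]>%g -> f x = dd m1 x.
    by move=> x Hx; rewrite ffunE -[x in proj x]mulg1 projE.
  have ft : forall x, x \in <[tau]>%g -> f x = 0.
    by move=> x Hx; rewrite ffunE -[x in proj x]mul1g projE ?dd0.
  have Fw' : forall h, h \in <[tau]>%g -> act h (dd m1 sigma) = dd m1 sigma.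
    by move=> h Hh; rewrite /dd -E1 Fw.
  have cf : cocycle act f.
    move=> g h; have [x Hx [y Hy ->]] := decomp g; have [x' Hx' [y' Hy' ->]] := decomp h.
    have -> : (x * y * (x' * y') = (x * x') * (y * y'))%g.
      by rewrite !mulgA -(mulgA x y x') -(commST Hx' Hy) !mulgA.
    rewrite !ffunE !projE ?groupM // actM (@fixw m1 Fw' y x' Hy Hx') ddcoc //.
  have Af : [/\ cocycle act f, coboundary_on act <[sigma]>%g f,
                  coboundary_on act <[tau]>%g f
                & coboundary_on act <[(sigma * tau)%g]>%g f].
    split => //.
    + by exists m1 => h Hh; rewrite fs.
    + by exists 0 => h Hh; rewrite ft // act0 subrr.
    + exists m2 => h Hh; apply: (coc_cyc _ cf _ Hh).
      by rewrite ffunE projE ?cycle_id // /dd -E1 E2.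
  exists f => //.
  have Hm := mfP (let: And4 _ _ Ht _ := Af in Ht).
  exists (mf f); split.
    by move=> h Hh; apply/ddfix; rewrite -Hm // ft.
  by rewrite /phi fs ?cycle_id // /dd -E1 opprB addrC subrK.
Qed.
End Aux.

Theorem mainTheorem17 (gT : finGroupType) (sigma tau : gT)
    (M : zmodType) (act : gT -> M -> M)
    (hG : (<[sigma]> \x <[tau]>)%g = [set: gT])
    (act1 : forall m, act 1%g m = m)
    (actM : forall g h m, act (g * h)%g m = act g (act h m))
    (actD : forall g m n, act g (m + n) = act g m + act g n) :
  @quot_iso {ffun gT -> M} M
    (* kernel of H^1(G,M) -> H^1(<s>,M) x H^1(<t>,M) x H^1(<st>,M) *)
    (fun f => [/\ cocycle act f, coboundary_on act <[sigma]>%g f,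
                  coboundary_on act <[tau]>%g f
                & coboundary_on act <[(sigma * tau)%g]>%g f])
    (fun f => cocycle act f /\ coboundary_on act [set: gT] f)
    (* ker(N_sigma) /\ M^{sigma-1} /\ M^{sigma tau - 1} *)
    (fun x => [/\ fixed_in act <[tau]>%g x, norm_map act sigma x = 0,
                  in_gm1 act sigma (fun _ => True) x
                & in_gm1 act (sigma * tau)%g (fun _ => True) x])
    (* (M^<tau>)^{sigma-1} *)
    (in_gm1 act sigma (fixed_in act <[tau]>%g)).
Proof. exact: (@main_sec gT sigma tau M act hG act1 actM actD). Qed.
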